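(* Let $G$ be a Lie group, let $\mathcal{X}$ and $\mathcal{Y}$ be linear vector fields on $G$ with flows $(\varphi_t)$ and $(\psi_t)$, and suppose there is an automorphism $\pi:G\to G$ with $\pi(\varphi_t(x))=\psi_t(\pi(x))$ and $\varphi_t(\pi^{-1}(x))=\pi^{-1}(\psi_t(x))$ for all $t\in\mathbb{R}$, $x\in G$. Let $h:G\to G$ be a (continuous) homomorphism, $K=\ker(h)$, $S=\ker(h\circ\pi^{-1})$, and set $I_1=\{x\in G:\varphi_t(x)\in K\ \forall t\in\mathbb{R}\}$, $I_2=\{y\in G:\psi_t(y)\in S\ \forall t\in\mathbb{R}\}$. Then $I_1$ is discrete if and only if $I_2$ is discrete. Moreover, $\mathrm{Fix}(\varphi)\cap K=\{e\}$ if and only if $\mathrm{Fix}(\psi)\cap S=\{e\}$.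
   Context: A vector field on a Lie group $G$ is linear if its flow is a one-parameter subgroup of $\mathrm{Aut}(G)$. $\mathrm{Fix}(\varphi)=\{g\in G:\varphi_t(g)=g\ \forall t\in\mathbb{R}\}$ denotes the set of fixed points of the flow $\varphi$, and $e$ is the identity of $G$. *)

(* Defs.v *)
From HB Require Import structures.
From mathcomp Require Import all_boot all_order all_algebra.
From mathcomp Require Import all_classical all_reals topology normedtype.
Set Implicit Arguments. Unset Strict Implicit. Unset Printing Implicit Defensive.
Import GRing.Theory Num.Theory numFieldNormedType.Exports.
Local Open Scope classical_set_scope.
Local Open Scope ring_scope.

Definition is_group (G : Type) (mul : G -> G -> G) (inv : G -> G) (e : G) : Prop :=
  [/\ (forall x y z, mul x (mul y z) = mul (mul x y) z),
      (forall x, mul e x = x /\ mul x e = x) &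
      (forall x, mul (inv x) x = e /\ mul x (inv x) = e)].

Definition topological_group (G : topologicalType)
  (mul : G -> G -> G) (inv : G -> G) (e : G) : Prop :=
  [/\ is_group mul inv e,
      continuous (fun p : G * G => mul p.1 p.2) &
      continuous inv].

Definition group_hom (G : Type) (mul : G -> G -> G) (f : G -> G) : Prop :=
  forall x y, f (mul x y) = mul (f x) (f y).

(* The flow of a linear vector field: a continuous one-parameter group
   (t |-> phi t) of continuous automorphisms of G, jointly continuous in (t,x). *)
Definition linear_flow (R : realType) (G : topologicalType)
  (mul : G -> G -> G) (phi : R -> G -> G) : Prop :=
  [/\ (forall t, group_hom mul (phi t)),
      (forall t, continuous (phi t)),
      (forall x, phi 0 x = x),
      (forall t s x, phi (t + s) x = phi t (phi s x)) &
      continuous (fun p : R * G => phi p.1 p.2)].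

Definition Fix (R : realType) (G : Type) (phi : R -> G -> G) : set G :=
  [set g | forall t, phi t g = g].

Definition Ker (G : Type) (e : G) (f : G -> G) : set G := [set x | f x = e].

Definition discrete_set (G : topologicalType) (A : set G) : Prop :=
  forall a, A a -> exists U : set G, nbhs a U /\ (forall y, U y -> A y -> y = a).

(* Main.v *)
Require Import Defs.
From mathcomp Require Import all_boot all_order all_algebra.
From mathcomp Require Import all_classical all_reals topology normedtype.
Import numFieldNormedType.Exports.
Local Open Scope classical_set_scope.
Local Open Scope ring_scope.

Lemma disc_transfer (G : topologicalType) (A B : set G) (f g : G -> G) :
  continuous g -> cancel g f -> (forall y, B y -> A (g y)) ->
  discrete_set A -> discrete_set B.
Proof.
move=> gc gf BA dA a Ba.
have [U [hU HU]] := dA _ (BA _ Ba).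
exists (g @^-1` U); split; first exact: gc a _ hU.
move=> y Uy By.
by rewrite -(gf y) -(gf a) (HU _ Uy (BA _ By)).
Qed.

Theorem corollary2p7 (R : realType) (G : topologicalType)
  (mul : G -> G -> G) (inv : G -> G) (e : G)
  (phi psi : R -> G -> G) (pi piinv h : G -> G) :
  topological_group mul inv e ->
  linear_flow mul phi -> linear_flow mul psi ->
  group_hom mul pi -> continuous pi -> continuous piinv ->
  cancel pi piinv -> cancel piinv pi ->
  (forall t x, pi (phi t x) = psi t (pi x)) ->
  (forall t x, phi t (piinv x) = piinv (psi t x)) ->
  group_hom mul h -> continuous h ->
  let K := Ker e h in
  let S := Ker e (fun x => h (piinv x)) in
  let I1 := [set x | forall t, K (phi t x)] in
  let I2 := [set y | forall t, S (psi t y)] in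
  (discrete_set I1 <-> discrete_set I2) /\
  (Fix phi `&` K = [set e] <-> Fix psi `&` S = [set e]).
Proof.
move=> [[mA m1 mV] _ _] _ _ pih pic piic pK piK c1 c2 hh hc K S I1 I2.
have pie : pi e = e.
  have E : pi e = mul (pi e) (pi e) by rewrite -pih (m1 e).1.
  have := (mV (pi e)).1.
  by rewrite {2}E mA (mV (pi e)).1 (m1 (pi e)).1.
have piie : piinv e = e by rewrite -{1}pie pK.
split; split.
- apply: (@disc_transfer G I1 I2 pi piinv piic piK) => y I2y t.
  rewrite /K /Ker /= c2; exact: I2y.
- apply: (@disc_transfer G I2 I1 piinv pi pic pK) => x I1x t.
  rewrite /S /Ker /= -c1 pK; exact: I1x.
- move=> H; apply/seteqP; split.
    move=> y [Fy Sy].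
    have : (Fix phi `&` K) (piinv y).
      by split => [t|]; [rewrite c2 Fy | exact: Sy].
    by rewrite H /= => E; rewrite -(piK y) E pie.
  move=> _ ->.
  have : [set e] e by [].
  rewrite -H => -[Fe Ke]; split => [t|].
    by rewrite -{1}pie -c1 Fe pie.
  by rewrite /S /Ker /= piie.
- move=> H; apply/seteqP; split.
    move=> x [Fx Kx].
    have : (Fix psi `&` S) (pi x).
      by split => [t|]; [rewrite -c1 Fx | rewrite /S /Ker /= pK].
    by rewrite H /= => E; rewrite -(pK x) E piie.
  move=> _ ->.
  have : [set e] e by [].
  rewrite -H => -[Fe Se]; split => [t|].
    by rewrite -{1}piie c2 Fe piie.
  by move: Se; rewrite /S /Ker /= piie.
Qed.
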